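(* Let $\mathcal{R}=\mathbb{F}_{q_1}\oplus\cdots\oplus\mathbb{F}_{q_r}$ with $r\ge1$, and let $k\ge1$. There exists a sequence $\mathbf{a}$ over $\mathcal{R}$ satisfying a linear recurrence of degree $k$ over $\mathcal{R}$ (with $c_0$ a unit) with $\rho(\mathbf{a})=|\mathcal{R}|^k-1$ if and only if $r=1$, i.e. $\mathcal{R}$ is a field.
   Context: $q_1,\dots,q_r$ are prime powers (not necessarily of the same characteristic), so $|\mathcal{R}|=q_1\cdots q_r$. A sequence $(a_n)_{n\ge0}$ over $\mathcal{R}$ satisfies a linear recurrence of degree $k$ if there are $c_0,\dots,c_{k-1}\in\mathcal{R}$ with $c_0$ a unit such that $a_{n+k}=\sum_{i=0}^{k-1}c_ia_{n+i}$ for all $n\ge0$; such sequences are purely periodic, and $\rho(\mathbf{a})$ is the least $m>0$ with $a_{n+m}=a_n$ for all $n\ge0$. *)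

(* Defs.v *)
From HB Require Import structures.
From mathcomp Require Import all_boot all_order all_algebra all_fingroup all_field.
Set Implicit Arguments. Unset Strict Implicit. Unset Printing Implicit Defensive.
Import GRing.Theory.
Local Open Scope ring_scope.

Definition PRing (r : nat) (F : 'I_r -> finFieldType) : finType :=
  {dffun forall i : 'I_r, F i}.

Section PRingOps.
Variables (r : nat) (F : 'I_r -> finFieldType).
Definition pzero : PRing F := [ffun i => (0 : F i)].
Definition pone  : PRing F := [ffun i => (1 : F i)].
Definition padd (x y : PRing F) : PRing F := [ffun i => x i + y i].
Definition pmul (x y : PRing F) : PRing F := [ffun i => x i * y i].
Definition punit (x : PRing F) : Prop := exists y : PRing F, pmul x y = pone.

Definition lin_rec (k : nat) (c : nat -> PRing F) (a : nat -> PRing F) : Prop :=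
  punit (c 0%N) /\
  forall n : nat, a (n + k)%N = \big[padd/pzero]_(i < k) pmul (c i) (a (n + i)%N).

Definition satisfies_lrec_deg (k : nat) (a : nat -> PRing F) : Prop :=
  exists c : nat -> PRing F, lin_rec k c a.

Definition is_period (a : nat -> PRing F) (m : nat) : Prop :=
  forall n : nat, a (n + m)%N = a n.
Definition least_period (a : nat -> PRing F) (m : nat) : Prop :=
  (0 < m)%N /\ is_period a m /\ forall m', (0 < m')%N -> is_period a m' -> (m <= m')%N.
End PRingOps.

(* Main.v *)
Require Import Defs.
From HB Require Import structures.
From mathcomp Require Import all_boot all_order all_algebra all_fingroup all_field.
From mathcomp Require Import all_solvable zify.
Set Implicit Arguments. Unset Strict Implicit. Unset Printing Implicit Defensive.
Import GRing.Theory.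
Local Open Scope ring_scope.

Lemma card_natr0 (F : finFieldType) : (#|F|%:R : F) = 0.
Proof.
have [p _ pcharFp] := finPcharP F.
have gt1 := finNzRing_gt1 F.
have := card_pprimeChar pcharFp; rewrite /= => ->.
rewrite natrX (pcharf0 pcharFp) expr0n; case: eqP => // e.
by move: gt1; rewrite (card_pprimeChar pcharFp) e.
Qed.

Lemma ext_exists (F : finFieldType) k : (0 < k)%N ->
  {L : splittingFieldType F | \dim {:L} = k & #|FinFieldExtType L| = (#|F| ^ k)%N}.
Proof.
move=> k_gt0; pose m := (#|F| ^ k)%N.
have m_gt1: (m > 1)%N by rewrite (ltn_exp2l 0) ?finNzRing_gt1.
have m_gt0 := ltnW m_gt1; have m1_gt0: (m.-1 > 0)%N by rewrite -ltnS prednK.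
pose q := 'X^m - 'X; have Dq R: q R = ('X^(m.-1) - 1) * ('X - 0).
  by rewrite subr0 mulrBl mul1r -exprSr prednK.
have /FinSplittingFieldFor[/= L splitLq]: q F != 0.
  by rewrite Dq monic_neq0 ?rpredM ?monicXsubC ?monicXnsubC.
rewrite rmorphB rmorphXn /= map_polyX -/(q L) in splitLq.
pose Fm := FinFieldExtType L.
suff [H1 H2] : \dim {:L} = k /\ #|Fm| = m by exists L.
have /finField_galois_generator[/= a _ Da]: (1 <= {:L})%VS by apply: sub1v.
pose Em := fixedSpace (a ^+ k)%g; rewrite dimv1 expn1 in Da.
have{splitLq} [zs DqL defL] := splitLq.
have mL0 : (m%:R : L) = 0.
  by rewrite /m natrX -(rmorph_nat (in_alg L)) card_natr0 rmorph0 expr0n gtn_eqF.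
have Uzs: uniq zs.
  rewrite -separable_prod_XsubC -(eqp_separable DqL) Dq separable_root andbC.
  rewrite /root !hornerE subr_eq0 eq_sym expr0n gtn_eqF ?oner_eq0 //=.
  rewrite cyclotomic.separable_Xn_sub_1 // -subn1 natrB // subr_eq0.
  by rewrite mL0 eq_sym oner_eq0.
suffices /eq_card cardE: Fm =i zs.
  have cFm : #|Fm| = m.
    rewrite cardE; apply: succn_inj; rewrite (card_uniqP _) //= -(size_prod_XsubC _ id).
    by rewrite -(eqp_size DqL) size_polyDl size_polyXn // size_polyN size_polyX.
  have h1 := card_vspace (fullv : {vspace finvect_type L}).
  have h2 : #|(fullv : {vspace finvect_type L})| = #|Fm|.
    by apply: eq_card => v; rewrite memvf.
  split=> //.
  move: h1; rewrite h2 cFm /m => /eqP; rewrite eqn_exp2l ?finNzRing_gt1 // => /eqP <-.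
  by [].
have in_zs: zs =i Em.
  move=> z; rewrite -root_prod_XsubC -(eqp_root DqL) (sameP fixedSpaceP eqP).
  rewrite /root !hornerE subr_eq0 /= /m; congr (_ == z).
  elim: (k) => [|i IHi]; first by rewrite gal_id.
  by rewrite expgSr expnSr exprM IHi galM ?Da ?memvf.
suffices defEm: Em = {:L}%VS by move=> z; rewrite in_zs defEm memvf.
apply/eqP; rewrite eqEsubv subvf -defL -[Em]subfield_closed agenvS //.
by rewrite subv_add sub1v; apply/span_subvP=> z; rewrite in_zs.
Qed.
Lemma field_seq (K : finFieldType) k : (0 < k)%N ->
  exists b c : nat -> K, c 0%N != 0 /\
    (forall n, b (n + k)%N = \sum_(i < k) c i * b (n + i)%N) /\
    (forall n, b (n + (#|K| ^ k - 1))%N = b n) /\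
    (forall m, (0 < m)%N -> (forall n, b (n + m)%N = b n) -> (#|K| ^ k - 1 <= m)%N).
Proof.
move=> k_gt0; have [L dimL cardL] := ext_exists K k_gt0.
pose Lf := FinFieldExtType L.
have /cyclicP[u defU] := field_unit_group_cyclic [set: {unit Lf}]%G.
pose al : L := val u.
have al_nz : al != 0 by apply/eqP => h; move: (valP u); rewrite /= -/al h unitr0.
have ordu : #[u]%g = (#|K| ^ k - 1)%N.
  by rewrite /order -defU card_finField_unit /= cardL subn1.
have alX m : (al ^+ m == 1) = (#|K| ^ k - 1 %| m)%N.
  rewrite -ordu order_dvdn; apply/eqP/eqP => [h|h].
    by apply: val_inj; rewrite /= FinRing.val_unitX.
  by have := FinRing.val_unitX m u; rewrite h => <-.
have alP (x : L) : x != 0 -> exists n, x = al ^+ n.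
  move=> nz; have : finField_unit (nz : x != 0 :> Lf) \in <[u]>%g by rewrite -defU inE.
  by case/cycleP => n hn; exists n; have := FinRing.val_unitX n u; rewrite -hn /= => <-.
have adjL : <<1%AS; al>>%VS = fullv.
  apply/eqP; rewrite eqEsubv subvf; apply/subvP => x _.
  have [-> | nz] := eqVneq x 0; first exact: mem0v.
  by have [n ->] := alP x nz; rewrite rpredX // memv_adjoin.
have degk : adjoin_degree (asval 1%AS) al = k.
  by rewrite adjoin_degreeE adjL dimv1 divn1.
pose p := minPoly 1%AS al.
have szp : size p = k.+1 by rewrite size_minPoly degk.
have hex j : exists e : K, p`_j == e *: 1.
  have : p`_j \in (1%VS : {vspace L}) by apply/polyOverP/minPolyOver.
  by case/vlineP => e he; exists e; rewrite he.
pose d j := xchoose (hex j).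
have dP j : p`_j = d j *: 1 by apply/eqP/(xchooseP (hex j)).
pose c j := - d j.
have rec : al ^+ k = \sum_(i < k) c i *: al ^+ i.
  have := minPolyxx 1%AS al; rewrite -/p horner_coef szp big_ord_recr /=.
  have -> : p`_k = 1 by have := monic_minPoly 1%AS al; rewrite monicE /lead_coef -/p szp => /eqP.
  rewrite mul1r addrC => /eqP; rewrite addr_eq0 => /eqP ->.
  rewrite -sumrN; apply: eq_bigr => i _.
  by rewrite dP mulr_algl /c scaleNr.
have c0 : c 0%N != 0.
  rewrite /c oppr_eq0; apply/eqP => d0.
  have p00 : p`_0 = 0 by rewrite dP d0 scale0r.
  have hdv : 'X - 0%:P %| p by rewrite dvdp_XsubCl /root horner_coef0 p00.
  have hov : 'X - 0%:P \is a polyOver (1%AS : {subfield L}).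
    by rewrite polyOverXsubC mem0v.
  have := minPoly_irr hov hdv.
  rewrite polyXsubC_eqp1 orbF => /eqp_root/(_ al).
  by rewrite root_minPoly root_XsubC (negbTE al_nz).
pose X := vbasis (fullv : {vspace L}).
have i0lt : (0 < \dim (fullv : {vspace L}))%N by rewrite dimL.
pose i0 : 'I_(\dim (fullv : {vspace L})) := Ordinal i0lt.
pose phi := coord X i0.
have phiz : phi X`_i0 = 1 by rewrite /phi coord_free ?eqxx // (basis_free (vbasisP fullv)).
exists (fun n => phi (al ^+ n)), c; split; first exact: c0.
split.
  move=> n; rewrite exprD rec mulr_sumr /phi linear_sum; apply: eq_bigr => i _.
  by rewrite -scalerAr linearZ exprD.
split.
  have h1 : al ^+ (#|K| ^ k - 1) = 1 by apply/eqP; rewrite alX.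
  by move=> n; rewrite exprD h1 mulr1.
move=> m m_gt0 hper; apply: dvdn_leq => //; rewrite -alX.
apply/negPn/negP => nx.
have xnz : al ^+ m - 1 != 0 by rewrite subr_eq0.
pose y := (al ^+ m - 1)^-1 * X`_i0.
have [y0 | ynz] := eqVneq y 0.
  move: phiz; have -> : X`_i0 = 0.
    by move: y0 => /eqP; rewrite /y mulf_eq0 invr_eq0 (negbTE xnz) /= => /eqP.
  by rewrite /phi linear0 => /eqP; rewrite eq_sym oner_eq0.
have [n yn] := alP y ynz.
move: phiz; have -> : X`_i0 = (al ^+ m - 1) * y by rewrite /y mulrA divff ?mul1r.
have hn := hper n; rewrite /= in hn.
rewrite yn mulrBl mul1r -exprD addnC /phi linearB /= -/phi hn subrr => /eqP.
by rewrite eq_sym oner_eq0.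
Qed.
Lemma big_comp r (F : 'I_r -> finFieldType) k (f : 'I_k -> PRing F) (i : 'I_r) :
  (\big[@padd r F/pzero F]_(j < k) f j) i = \sum_(j < k) f j i.
Proof.
by apply: (big_morph (fun x : PRing F => x i)) => [x y|]; rewrite /padd /pzero ffunE.
Qed.

Definition st r (F : 'I_r -> finFieldType) k (a : nat -> PRing F) n : {ffun 'I_k -> PRing F} :=
  [ffun j : 'I_k => a (n + j)%N].

Lemma st_step r (F : 'I_r -> finFieldType) k (a c : nat -> PRing F) n m :
  lin_rec k c a ->
  st k a n = st k a m -> st k a n.+1 = st k a m.+1.
Proof.
move=> [_ hr] e; apply/ffunP => j; rewrite !ffunE !addSnnS.
have [lt|ge] := ltnP j.+1 k.
  by have := congr1 (fun s : {ffun _ -> PRing F} => s (Ordinal lt)) e; rewrite !ffunE.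
have -> : j.+1 = k by apply/eqP; rewrite eqn_leq ge ltn_ord.
rewrite !hr; apply: eq_bigr => i _.
by have := congr1 (fun s : {ffun _ -> PRing F} => s i) e; rewrite !ffunE => ->.
Qed.

Lemma st_stepn r (F : 'I_r -> finFieldType) k (a c : nat -> PRing F) n m t :
  lin_rec k c a ->
  st k a n = st k a m -> st k a (n + t) = st k a (m + t).
Proof.
move=> hr e; elim: t => [|t IH]; first by rewrite !addn0.
by rewrite !addnS; exact: (st_step hr IH).
Qed.

Lemma period_iter r (F : 'I_r -> finFieldType) (a : nat -> PRing F) N :
  is_period a N -> forall t n, a (n + t * N)%N = a n.
Proof.
move=> hp; elim => [|t IH] n; first by rewrite mul0n addn0.
by rewrite mulSn addnA IH hp.
Qed.

Lemma st_period r (F : 'I_r -> finFieldType) k (a : nat -> PRing F) N :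
  is_period a N -> forall t n, st k a (n + t * N) = st k a n.
Proof.
move=> hp t n; apply/ffunP => j; rewrite !ffunE addnAC.
exact: period_iter.
Qed.

Lemma st_eq_period r (F : 'I_r -> finFieldType) k (a c : nat -> PRing F) N i j :
  (0 < k)%N ->
  lin_rec k c a ->
  (0 < N)%N -> is_period a N -> (i <= j)%N -> st k a i = st k a j -> is_period a (j - i).
Proof.
move=> k0 hr N0 hp lij e n.
have key x : (i <= x)%N -> a (x + (j - i))%N = a x.
  move=> lix; have := st_stepn (x - i) hr e.
  move/(congr1 (fun s : {ffun _ -> PRing F} => s (Ordinal k0))); rewrite !ffunE /=.
  have -> : (i + (x - i) + 0 = x)%N by lia.
  by have -> : (j + (x - i) + 0 = x + (j - i))%N by lia.
rewrite -(period_iter hp i n) -(period_iter hp i (n + (j - i))).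
have -> : (n + (j - i) + i * N = n + i * N + (j - i))%N by lia.
apply: key; nia.
Qed.

Definition zs r (F : 'I_r -> finFieldType) k (i : 'I_r) (s : {ffun 'I_k -> PRing F}) : bool :=
  [forall j, s j i == 0].

Lemma zs_step r (F : 'I_r -> finFieldType) k (a c : nat -> PRing F) i n :
  lin_rec k c a -> zs i (st k a n) -> zs i (st k a n.+1).
Proof.
move=> [_ hr] /forallP h; apply/forallP => j; rewrite ffunE addSnnS.
have [lt|ge] := ltnP j.+1 k.
  by have := h (Ordinal lt); rewrite ffunE.
have -> : j.+1 = k by apply/eqP; rewrite eqn_leq ge ltn_ord.
rewrite hr big_comp; apply/eqP; apply: big1 => l _; rewrite /pmul ffunE.
by have := h l; rewrite ffunE => /eqP ->; rewrite mulr0.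
Qed.

Lemma zs_stepn r (F : 'I_r -> finFieldType) k (a c : nat -> PRing F) i n t :
  lin_rec k c a -> zs i (st k a n) -> zs i (st k a (n + t)).
Proof.
move=> hr h; elim: t => [|t IH]; first by rewrite addn0.
by rewrite addnS; exact: (zs_step hr IH).
Qed.

Lemma zs_all r (F : 'I_r -> finFieldType) k (a c : nat -> PRing F) i N n :
  lin_rec k c a -> (0 < N)%N -> is_period a N -> zs i (st k a n) = zs i (st k a 0).
Proof.
move=> hr N0 hp; apply/idP/idP => h.
  have := zs_stepn (n * N - n) hr h.
  have -> : (n + (n * N - n) = 0 + n * N)%N by nia.
  by rewrite st_period.
by have := zs_stepn n hr h.
Qed.

Lemma dir1 r (F : 'I_r -> finFieldType) k (a : nat -> PRing F) :
  (1 < r)%N -> (0 < k)%N -> satisfies_lrec_deg k a ->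
  least_period a (#|PRing F| ^ k - 1) -> False.
Proof.
move=> r1 hk [c hrec] [N0 [hp hmin]].
set N := (#|PRing F| ^ k - 1)%N in N0 hp hmin.
pose T := {ffun 'I_k -> PRing F}.
pose O := [set st k a (val t) | t : 'I_N] : {set T}.
have inj : injective (fun t : 'I_N => st k a t).
  move=> t1 t2 /= e; apply/val_inj => /=.
  case: (ltngtP t1 t2) => // lt.
    have := st_eq_period hk hrec N0 hp (ltnW lt) e.
    move/hmin; rewrite subn_gt0 => /(_ lt); have := ltn_ord t2; lia.
  have := st_eq_period hk hrec N0 hp (ltnW lt) (esym e).
  move/hmin; rewrite subn_gt0 => /(_ lt); have := ltn_ord t1; lia.
have cO : #|O| = N by rewrite card_imset // card_ord.
have cT : #|T| = (#|PRing F| ^ k)%N by rewrite card_ffun card_ord.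
have zsO i s : s \in O -> zs i s = zs i (st k a 0).
  by case/imsetP => t _ ->; exact: (zs_all i t hrec N0 hp).
have out2 (x y : T) : x != y -> x \notin O -> y \notin O -> False.
  move=> xy xO yO.
  have sub : O \subset ~: [set x; y].
    apply/subsetP => s sO; rewrite !inE; apply/norP; split; apply/negP => /eqP e;
      by move: sO; rewrite e ?(negbTE xO) ?(negbTE yO).
  have := subset_leq_card sub; have := cardsC [set x; y]; rewrite cards2 xy cO /=.
  rewrite -/T cT /N; move: (#|PRing F| ^ k)%N #|~: [set x; y]| => M B; lia.
have both (x y : T) i : zs i x != zs i y -> x \in O -> y \in O -> False.
  by move=> d xO yO; move: d; rewrite (zsO i x xO) (zsO i y yO) eqxx.
have dist (x y : T) i : zs i x != zs i y -> x != y.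
  by move=> d; apply/eqP => e; move: d; rewrite e eqxx.
pose i1 : 'I_r := Ordinal (ltnW r1).
pose i2 : 'I_r := Ordinal r1.
have i12 : i1 != i2 by [].
pose e (l : 'I_r) : T := [ffun j : 'I_k => [ffun l' => if l' == l then 1 else 0]].
pose z0 : T := [ffun j : 'I_k => pzero F].
have zs_e l i : zs i (e l) = (i != l).
  apply/forallP/idP => [h|h j]; last by rewrite !ffunE (negbTE h).
  apply/negP => /eqP il; have := h (Ordinal hk); rewrite !ffunE il eqxx.
  by rewrite oner_eq0.
have zs_z i : zs i z0 by apply/forallP => j; rewrite !ffunE.
have d01 : zs i1 z0 != zs i1 (e i1) by rewrite zs_e zs_z eqxx.
have d02 : zs i2 z0 != zs i2 (e i2) by rewrite zs_e zs_z eqxx.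
have d12 : zs i1 (e i1) != zs i1 (e i2) by rewrite !zs_e eqxx i12.
case Hz: (z0 \in O); case H1: (e i1 \in O); case H2: (e i2 \in O).
- exact: (both _ _ _ d01 Hz H1).
- exact: (both _ _ _ d01 Hz H1).
- exact: (both _ _ _ d02 Hz H2).
- by apply: (out2 _ _ (dist _ _ _ d12)); rewrite ?H1 ?H2.
- exact: (both _ _ _ d12 H1 H2).
- by apply: (out2 _ _ (dist _ _ _ d02)); rewrite ?Hz ?H2.
- by apply: (out2 _ _ (dist _ _ _ d01)); rewrite ?Hz ?H1.
- by apply: (out2 _ _ (dist _ _ _ d01)); rewrite ?Hz ?H1.
Qed.

Theorem theorem4p6 (r : nat) (F : 'I_r -> finFieldType) (k : nat)
  (hr : (1 <= r)%N) (hk : (1 <= k)%N) :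
  (exists a : nat -> PRing F,
      satisfies_lrec_deg k a /\ least_period a (#|PRing F| ^ k - 1)%N)
  <-> r = 1%N.
Proof.
split.
  move=> [a [hs hl]]; apply/eqP; rewrite eqn_leq hr andbT leqNgt; apply/negP => r1.
  exact: (dir1 r1 hk hs hl).
move=> er; subst r.
have H (i : 'I_1) : exists bc : (nat -> F i) * (nat -> F i),
    bc.2 0%N != 0 /\
    (forall n, bc.1 (n + k)%N = \sum_(j < k) bc.2 j * bc.1 (n + j)%N) /\
    (forall n, bc.1 (n + (#|F i| ^ k - 1))%N = bc.1 n) /\
    (forall m, (0 < m)%N -> (forall n, bc.1 (n + m)%N = bc.1 n) -> (#|F i| ^ k - 1 <= m)%N).
  by have [b [c hbc]] := field_seq (F i) hk; exists (b, c).
have [u hu] := fin_all_exists H.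
have cardR : #|PRing F| = #|F ord0|.
  by rewrite /PRing card_dep_ffun /image_mem enum_ordSl enum_ord0 /= muln1.
pose a n : PRing F := [ffun i => (u i).1 n].
pose cc j : PRing F := [ffun i => (u i).2 j].
exists a; split.
  exists cc; split.
    exists [ffun i => ((u i).2 0%N)^-1]; apply/ffunP => i; rewrite !ffunE.
    by rewrite divff //; case: (hu i).
  move=> n; apply/ffunP => i; rewrite big_comp !ffunE.
  have [_ [-> _]] := hu i; apply: eq_bigr => j _; rewrite /pmul !ffunE.
  by [].
rewrite cardR; have [_ [_ [hp hm]]] := hu ord0.
split; first by rewrite subn_gt0 (ltn_exp2l 0) // finNzRing_gt1.
split.
  move=> n; apply/ffunP => i; rewrite !ffunE (ord1 i); exact: hp.
move=> m m0 hpm; apply: hm => // n.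
by have := congr1 (fun s : PRing F => s ord0) (hpm n); rewrite !ffunE.
Qed.
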